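(* Fix an integer $n\ge 2$, and assume that for every choice of positive integers $w_1,\ldots,w_n$ one has either $\mathrm{ML}(w_1,\ldots,w_n)=\frac{s}{ns+1}$ for some $s\in\mathbb{N}$ or $\mathrm{ML}(w_1,\ldots,w_n)\ge\frac1n$. Then for any positive real numbers $v_1,\ldots,v_n$, either $\mathrm{ML}(v_1,\ldots,v_n)=\frac{s}{ns+1}$ for some $s\in\mathbb{N}$, or $\mathrm{ML}(v_1,\ldots,v_n)\ge\frac1n$.
   Context: For a real number $x$, $\Vert x\Vert$ denotes the distance from $x$ to the nearest integer. For positive real numbers $v_1,\ldots,v_k$, the maximum loneliness is $\mathrm{ML}(v_1,\ldots,v_k)=\sup_{t\in\mathbb{R}}\min_{1\le i\le k}\Vert t v_i\Vert$ (for integer speeds the supremum is a maximum). Here $\mathbb{N}=\{1,2,3,\ldots\}$. *)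

(* Defs.v *)
From mathcomp Require Import all_boot all_order all_algebra.
From mathcomp Require Import all_classical all_reals.
Set Implicit Arguments. Unset Strict Implicit. Unset Printing Implicit Defensive.
Import Order.TTheory GRing.Theory Num.Theory.
Local Open Scope ring_scope.
Local Open Scope classical_set_scope.

Definition dist_nint (R : realType) (x : R) : R :=
  Num.min (x - (Num.floor x)%:~R) ((Num.ceil x)%:~R - x).

(* Loneliness at time t: min_i ||t v_i|| (n >= 1 in all uses; the
   neutral element 1 is never reached for n >= 1 since ||.|| <= 1/2). *)
Definition lonely (R : realType) (n : nat) (v : 'I_n -> R) (t : R) : R :=
  \big[Num.min/1]_(i < n) dist_nint (t * v i).

Definition ML (R : realType) (n : nat) (v : 'I_n -> R) : R :=
  sup (range (lonely v)).

(* Main.v *)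
Require Import Defs.
From mathcomp Require Import all_boot all_order all_algebra.
From mathcomp Require Import all_classical all_reals.
From mathcomp Require Import ring lra.
Import Order.TTheory GRing.Theory Num.Theory.
Local Open Scope ring_scope.
Local Open Scope classical_set_scope.

Section Aux.
Context {R : realType}.

Lemma dn_le (x : R) (k : int) : dist_nint x <= `|x - k%:~R|.
Proof.
rewrite /dist_nint ge_min; apply/orP.
have [h|h] := lerP (k%:~R) x.
  left; have hk : k <= Num.floor x by rewrite floor_ge_int.
  have hk' : (k%:~R : R) <= (Num.floor x)%:~R by rewrite ler_int.
  lra.
right; have hk : Num.ceil x <= k by rewrite ceil_le_int ltW.
have hk' : ((Num.ceil x)%:~R : R) <= k%:~R by rewrite ler_int.
lra.
Qed.

Lemma dn_att (x : R) : exists k : int, dist_nint x = `|x - k%:~R|.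
Proof.
rewrite /dist_nint.
have [h|h] := leP (x - (Num.floor x)%:~R) ((Num.ceil x)%:~R - x).
  exists (Num.floor x); rewrite ger0_norm // subr_ge0 floor_le //.
exists (Num.ceil x); rewrite distrC ger0_norm // subr_ge0 ceil_ge //.
Qed.

Lemma dn_lip (x y : R) (k : int) :
  dist_nint x <= `|x - y - k%:~R| + dist_nint y.
Proof.
have [k0 ->] := dn_att y.
apply: (le_trans (dn_le x (k + k0))).
have -> : x - (k + k0)%:~R = (x - y - k%:~R) + (y - k0%:~R) by rewrite intrD; ring.
exact: ler_normD.
Qed.

Lemma lonely_cmp n (a b : 'I_n -> R) (t s d : R) : 0 <= d ->
  (forall i, dist_nint (t * a i) <= dist_nint (s * b i) + d) ->
  lonely a t <= lonely b s + d.
Proof.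
move=> d0 h; rewrite /lonely.
apply: (big_ind2 (fun x y => x <= y + d)) => //; first by lra.
move=> x1 y1 x2 y2 h1 h2.
have [hy|hy] := leP y1 y2.
  by rewrite ge_min h1.
by rewrite ge_min h2 orbT.
Qed.

Lemma lonely_le1 n (a : 'I_n -> R) t : lonely a t <= 1.
Proof.
rewrite /lonely; apply: (big_ind (fun x => x <= 1)) => // [x y hx hy|i _].
  by rewrite ge_min hx.
rewrite /dist_nint ge_min; apply/orP; left.
have := floor_itv (t * a i); rewrite intrD; lra.
Qed.

Lemma dn_ge0 (x : R) : 0 <= dist_nint x.
Proof. by have [k ->] := dn_att x. Qed.

Lemma lonely_ge0 n (a : 'I_n -> R) t : 0 <= lonely a t.
Proof.
rewrite /lonely; apply: (big_ind (fun x => 0 <= x)) => // [x y hx hy|i _].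
  by rewrite le_min hx hy.
exact: dn_ge0.
Qed.

Lemma has_sup_lonely n (a : 'I_n -> R) : has_sup (range (lonely a)).
Proof.
split; first by exists (lonely a 0), 0.
by exists 1 => _ [t _ <-]; exact: lonely_le1.
Qed.

Lemma lonely_le_ML n (a : 'I_n -> R) t : lonely a t <= ML a.
Proof. by apply: sup_upper_bound; [exact: has_sup_lonely| exists t]. Qed.

Lemma ML_le n (a : 'I_n -> R) x : (forall t, lonely a t <= x) -> ML a <= x.
Proof.
move=> h; apply: ge_sup; first by exists (lonely a 0), 0.
by move=> _ [t _ <-].
Qed.

End Aux.

Section Dir.
Context {R : realType}.

Definition frac (x : R) := x - (Num.floor x)%:~R.

Lemma frac_itv x : 0 <= frac x < 1.
Proof. rewrite /frac; have := floor_itv x; rewrite intrD; move=> /andP[h1 h2]. apply/andP; lra. Qed.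

Lemma tech (x y p q : R) : `|x - p - (y - q)| = `|y - x - (q - p)|.
Proof. by rewrite -normrN; congr (`|_|); lra. Qed.

Lemma dirichlet n (v : 'I_n -> R) (d : R) : 0 < d ->
  exists T : nat, (0 < T)%N /\ exists m : 'I_n -> int,
    forall i, `|T%:R * v i - (m i)%:~R| < d.
Proof.
move=> d0.
pose N := Num.bound (1 / d).
have hN : 1 / d < N%:R by apply: archi_boundP; rewrite divr_ge0 // ltW.
have N0 : (0 < N)%N.
  rewrite -(ltr_nat R); apply: lt_trans hN; rewrite divr_gt0 //.
have hNd : 1 / N%:R < d.
  rewrite ltr_pdivrMr ?ltr0n //. rewrite ltr_pdivrMr // in hN. by rewrite mulrC.
clearbody N.
pose fr (q : nat) i := frac (q%:R * v i).
pose K := #|{ffun 'I_n -> 'I_N.+1}|.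
pose f (q : 'I_K.+1) : {ffun 'I_n -> 'I_N.+1} :=
  [ffun i => inord (Num.truncn (N%:R * fr q i))].
have [[q1 [q2 [hne heq]]]|nope] :=
  pselect (exists q1 q2 : 'I_K.+1, q1 != q2 /\ f q1 = f q2); last first.
  have inj : injective f.
    move=> q1 q2 hq; case: (eqVneq q1 q2) => // hne; exfalso; apply: nope.
    by exists q1, q2.
  have := leq_card f inj; rewrite card_ord /K; by rewrite ltnn.
have close : forall i, `|fr q1 i - fr q2 i| < d.
  move=> i; have := congr1 (fun g : {ffun 'I_n -> 'I_N.+1} => val (g i)) heq; rewrite /= !ffunE.
  have tb : forall q : 'I_K.+1, (Num.truncn (N%:R * fr q i) < N.+1)%N.
    move=> q; rewrite ltnS; have /andP[h1 h2] := frac_itv (q%:R * v i).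
    rewrite -ltnS truncn_lt_nat ?mulr_ge0 //. 
    rewrite /fr -[N.+1]addn1 natrD; have hN0 : (0:R) <= N%:R := ler0n _ _; nra.
  rewrite !inordK ?tb // => ht.
  have /andP[a1 a2] := frac_itv (q1%:R * v i).
  have /andP[b1 b2] := frac_itv (q2%:R * v i).
  have := truncn_itv (mulr_ge0 (ler0n R N) a1).
  have := truncn_itv (mulr_ge0 (ler0n R N) b1).
  rewrite -ht /fr; set t := (Num.truncn _)%:R; set u := frac _; set w := frac _.
  move=> /andP[c1 c2] /andP[c3 c4].
  have : `|N%:R * u - N%:R * w| < 1.
    rewrite ltr_norml; rewrite mulrSr in c2 c4. apply/andP; split; lra.
  rewrite -mulrBr normrM normr_nat mulrC.
  move=> h; apply: le_lt_trans hNd; rewrite ler_pdivlMr ?ltr0n // distrC; exact: ltW.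
have key : forall a b : nat, (a < b)%N -> (forall i, `|fr a i - fr b i| < d) ->
  exists T : nat, (0 < T)%N /\ exists m : 'I_n -> int,
    forall i, `|T%:R * v i - (m i)%:~R| < d.
  move=> a b hab hc; exists (b - a)%N; split; first by rewrite subn_gt0.
  exists (fun i => Num.floor (b%:R * v i) - Num.floor (a%:R * v i)) => i.
  have := hc i; rewrite /fr /frac (natrB R (ltnW hab)) intrB mulrBl.
  by rewrite tech.
have [h|h|h] := ltngtP q1 q2.
- exact: (key q1 q2).
- by apply: (key q2 q1) => // i; rewrite distrC.
- by rewrite (val_inj h) eqxx in hne.
Qed.

End Dir.

Section Appr.
Context {R : realType}.

Lemma approx n (v : 'I_n -> R) (hv : forall i, 0 < v i) (e : R) : 0 < e ->
  exists w : 'I_n -> nat, (forall i, (0 < w i)%N) /\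
    ML v - e <= ML (fun i => (w i)%:R : R) /\ ML (fun i => (w i)%:R : R) <= ML v + e.
Proof.
move=> e0.
have e2 : 0 < e / 2 by rewrite divr_gt0.
have [_ [t0 _ <-] ht0] := sup_adherent e2 (has_sup_lonely _ v).
rewrite -/(ML v) in ht0.
pose d0 := \big[Num.min/1]_i v i.
have d0p : 0 < d0.
  by apply: (big_ind (fun x => 0 < x)) => // x y hx hy; rewrite lt_min hx hy.
have d0le i : d0 <= v i by rewrite /d0 (bigD1 i) //= ge_min lexx.
pose q := e / 2 / (`|t0| + 1).
have t1 : 0 < `|t0| + 1 by have := normr_ge0 t0; lra.
have q0 : 0 < q by rewrite divr_gt0.
have hq : q * (`|t0| + 1) = e / 2 by rewrite /q divfK // gt_eqF.
have qle : q <= e / 2 by have := normr_ge0 t0; nra.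
have qt : `|t0| * q <= e / 2 by have := normr_ge0 t0; nra.
pose d := Num.min d0 q.
have dp : 0 < d by rewrite lt_min d0p q0.
have dq : d <= q by rewrite ge_min lexx orbT.
have dd0 : d <= d0 by rewrite ge_min lexx.
have [T [T0 [m hm]]] := dirichlet _ v _ dp.
have T1 : 1 <= (T%:R : R) by rewrite ler1n.
have mpos i : 0 < m i.
  rewrite -(ltr0z R); have := hm i; rewrite ltr_norml => /andP[h1 h2].
  have := d0le i; have := hv i; nra.
exists (fun i => `|m i|%N); split.
  by move=> i; rewrite absz_gt0 gt_eqF.
have -> : (fun i => (`|m i|%N)%:R : R) = (fun i => (m i)%:~R).
  by apply: funext => i; rewrite natr_absz gtr0_norm ?mpos.
split.
  have : lonely v t0 <= lonely (fun i => (m i)%:~R) (t0 / T%:R) + `|t0| * d.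
    apply: lonely_cmp; first by apply: mulr_ge0; [exact: normr_ge0 | exact: ltW].
    move=> i; apply: le_trans (dn_lip (t0 * v i) (t0 / T%:R * (m i)%:~R) 0) _; rewrite [X in X <= _]addrC; apply: lerD => //.
    have -> : t0 * v i - t0 / T%:R * (m i)%:~R - 0%:~R = (t0 / T%:R) * (T%:R * v i - (m i)%:~R).
      by field; rewrite pnatr_eq0 -lt0n.
    rewrite normrM; apply: ler_pM => //.
      rewrite normrM normfV normr_nat ler_pdivrMr ?ltr0n //.
      by have := normr_ge0 t0; nra.
    exact: ltW.
  have := lonely_le_ML _ (fun i => (m i)%:~R) (t0 / T%:R).
  have : `|t0| * d <= `|t0| * q by rewrite ler_wpM2l.
  lra.
apply: ML_le => t.
pose j := Num.floor t.
pose s := (t - j%:~R) * T%:R.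
have hj : 0 <= t - j%:~R < 1 by have := floor_itv t; rewrite intrD => /andP[a b]; apply/andP; lra.
apply: (@le_trans _ _ (lonely v s + d)).
  apply: lonely_cmp; first exact: ltW.
  move=> i; apply: le_trans (dn_lip (t * (m i)%:~R) (s * v i) (j * m i)) _; rewrite [X in X <= _]addrC; apply: lerD => //.
  have -> : t * (m i)%:~R - s * v i - (j * m i)%:~R = (t - j%:~R) * ((m i)%:~R - T%:R * v i).
    by rewrite intrM /s; ring.
  rewrite normrM -[d]mul1r; apply: ler_pM => //.
    by case/andP: hj => a b; rewrite ger0_norm // ltW.
  by rewrite distrC ltW.
have := lonely_le_ML _ v s; lra.
Qed.

End Appr.

Section Gap.
Context {R : realType}.

Definition gfun (n s : nat) : R := s%:R / (n * s + 1)%:R.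

Lemma gap (n B : nat) (M : R) :
  (exists s, [/\ (0 < s)%N, (s < B)%N & M = gfun n s]) \/
  exists2 eta, 0 < eta & forall s, (0 < s)%N -> (s < B)%N -> eta <= `|gfun n s - M|.
Proof.
elim: B => [|B [[s [s0 sB ->]]|[eta eta0 heta]]].
- by right; exists 1 => // s _; rewrite ltn0.
- by left; exists s; split => //; rewrite ltnS ltnW.
case: (boolP ((0 < B)%N && (M == gfun n B))) => [/andP[h1 /eqP h2]|hb].
  by left; exists B.
right; exists (if (0 < B)%N then Num.min eta `|gfun n B - M| else eta).
  case B0: (0 < B)%N => //; rewrite B0 /= in hb.
  by rewrite lt_min eta0 normr_gt0 subr_eq0 eq_sym.
move=> s s0; rewrite ltnS leq_eqVlt => /orP[/eqP esB|sB].
  by rewrite esB in s0 *; rewrite s0 ge_min lexx orbT.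
case: (0 < B)%N; last exact: heta.
by rewrite ge_min heta.
Qed.

End Gap.

Theorem theorem3p4 (R : realType) (n : nat) (hn : (2 <= n)%N) :
  (forall w : 'I_n -> nat, (forall i, (0 < w i)%N) ->
     (exists s : nat, (0 < s)%N /\
        ML (fun i => (w i)%:R : R) = s%:R / (n * s + 1)%:R)
     \/ 1 / n%:R <= ML (fun i => (w i)%:R : R)) ->
  forall v : 'I_n -> R, (forall i, 0 < v i) ->
    (exists s : nat, (0 < s)%N /\ ML v = s%:R / (n * s + 1)%:R)
    \/ 1 / n%:R <= ML v.
Proof.
move=> hyp v hv.
have n0 : (0 : R) < n%:R by rewrite ltr0n; apply: leq_trans hn.
have M0 : 0 <= ML v by apply: le_trans (lonely_ge0 _ v 0) (lonely_le_ML _ v 0).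
case: (lerP (1 / n%:R) (ML v)) => h; [by right | left].
set M := ML v in M0 h *.
pose e0 := (1 / n%:R - M) / 4.
have e00 : 0 < e0 by rewrite divr_gt0 // subr_gt0.
pose c := M + 2 * e0.
have hc1 : c < 1 / n%:R by rewrite /c /e0; lra.
have hc : c * n%:R < 1 by rewrite -ltr_pdivlMr.
have c0 : 0 < c by rewrite /c; lra.
have nc : 0 < 1 - n%:R * c by rewrite mulrC; lra.
pose B := Num.bound (c / (1 - n%:R * c)).
have hB : forall s, (0 < s)%N -> gfun n s <= c -> (s < B)%N.
  move=> s s0 hs; rewrite -(ltr_nat R); apply: le_lt_trans (archi_boundP _); last first.
    by rewrite divr_ge0 // ?ltW.
  rewrite ler_pdivlMr //.
  rewrite /gfun ler_pdivrMr ?ltr0n ?addn1 // -addn1 natrD natrM in hs.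
  have -> : s%:R * (1 - n%:R * c) = s%:R - c * (n%:R * s%:R) by ring.
  lra.
have [[s [s0 sB hs]]|[eta eta0 heta]] := gap n B M.
  by exists s; split.
exfalso.
pose e := Num.min e0 (eta / 4).
have ep : 0 < e by rewrite lt_min e00 divr_gt0.
have ee0 : e <= e0 by rewrite ge_min lexx.
have eeta : e <= eta / 4 by rewrite ge_min lexx orbT.
have [w [hw0 [hl hu]]] := approx _ v hv e ep.
case: (hyp w hw0) => [[s [s0 hs]]|hge].
- rewrite hs -/M in hl hu.
  have sB : (s < B)%N by apply: hB => //; rewrite /gfun /c; lra.
  have := heta s s0 sB.
  have : `|gfun n s - M| <= e by rewrite ler_norml /gfun; apply/andP; lra.
  lra.
- rewrite -/M in hu; have := hc1; rewrite /c; lra.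
Qed.
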